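(* Let $X$ and $Y$ be non-negative random variables. Then $X\geq_{ss}Y$ if and only if $h(X)\geq_{ss}h(Y)$ for every star-shaped function $h$.
   Context: A function $h:[0,\infty)\to[0,\infty)$ with $h(0)=0$ is star-shaped (at the origin) if $x\mapsto h(x)/x$ is increasing (non-decreasing) on $(0,\infty)$. For non-negative random variables $X,Y$, $X\geq_{ss}Y$ (star-shaped order) means $\mathbb{E}\,u(X)\geq\mathbb{E}\,u(Y)$ for every star-shaped function $u$ for which the expectations exist. *)

(* Defs.v *)
From mathcomp Require Import all_boot all_order all_algebra.
From mathcomp Require Import all_classical all_reals all_analysis.
Set Implicit Arguments. Unset Strict Implicit. Unset Printing Implicit Defensive.
Import Order.TTheory GRing.Theory Num.Theory.
Local Open Scope ring_scope.

(* h : [0,oo) -> [0,oo) with h 0 = 0 and x |-> h x / x non-decreasing on (0,oo).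
   Only the values of h on [0,oo) matter. *)
Definition star_shaped (R : realType) (h : R -> R) : Prop :=
  [/\ h 0 = 0,
      (forall x, 0 <= x -> 0 <= h x) &
      (forall x y, 0 < x -> x <= y -> h x / x <= h y / y)].

Definition ss_ge (d : measure_display) (T : measurableType d) (R : realType)
    (P : probability T R) (X Y : T -> R) : Prop :=
  forall u : R -> R, star_shaped u ->
    P.-integrable setT (EFin \o (u \o X)) ->
    P.-integrable setT (EFin \o (u \o Y)) ->
    (\int[P]_t (u (Y t))%:E <= \int[P]_t (u (X t))%:E)%E.

(* Main.v *)
Require Import Defs.
From mathcomp Require Import all_boot all_order all_algebra.
From mathcomp Require Import all_classical all_reals all_analysis.
Import Order.TTheory GRing.Theory Num.Theory.
Local Open Scope ring_scope.

Lemma star_comp (R : realType) (u h : R -> R) :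
  star_shaped u -> star_shaped h -> star_shaped (u \o h).
Proof.
move=> [u0 un um] [h0 hn hm]; split => /=.
- by rewrite h0 u0.
- by move=> x x0; apply: un; apply: hn.
move=> x y x0 xy.
have y0 : 0 < y by apply: lt_le_trans xy.
have hx := hn x (ltW x0); have hy := hn y (ltW y0).
have hxy := hm x y x0 xy.
have Hr : 0 <= u (h y) / y by apply: divr_ge0 => //; [apply: un | exact: ltW].
have [hxz|hxp] := eqVneq (h x) 0.
  by rewrite hxz u0 mul0r.
have hxp' : 0 < h x by rewrite lt_def hxp hx.
have hxle : h x <= h y.
  have ex : h x = h x / x * x by rewrite mulfVK ?gt_eqF.
  have ey : h y = h y / y * y by rewrite mulfVK ?gt_eqF.
  rewrite ex ey; apply: (le_trans (y := h y / y * x)).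
    by apply: ler_wpM2r => //; exact: ltW.
  apply: ler_wpM2l => //; apply: divr_ge0 => //; exact: ltW.
have hyp : 0 < h y by apply: lt_le_trans hxle.
have e1 : u (h x) / x = (u (h x) / h x) * (h x / x).
  by rewrite mulrA mulfVK ?gt_eqF.
have e2 : u (h y) / y = (u (h y) / h y) * (h y / y).
  by rewrite mulrA mulfVK ?gt_eqF.
rewrite e1 e2; apply: ler_pM => //.
- by apply: divr_ge0 => //; apply: un.
- by apply: divr_ge0 => //; exact: ltW.
- exact: um.
Qed.

Lemma id_star (R : realType) : star_shaped (fun x : R => x).
Proof.
split => // x y x0 xy; have y0 : 0 < y by apply: lt_le_trans xy.
by rewrite !mulfV ?gt_eqF.
Qed.

Theorem lemma12 (R : realType) (d : measure_display) (T : measurableType d)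
    (P : probability T R) (X Y : {RV P >-> R})
    (hX : forall t, 0 <= X t) (hY : forall t, 0 <= Y t) :
  ss_ge P X Y <->
  (forall h : R -> R, star_shaped h -> ss_ge P (h \o X) (h \o Y)).
Proof.
split.
- move=> H h sh u su iX iY.
  exact: (H (u \o h) (@star_comp R u h su sh) iX iY).
- move=> H; exact: (H _ (@id_star R)).
Qed.
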